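(* Let $M,K\ge 1$, let $\mathbf{H}=[\mathbf{h}_{:1},\dots,\mathbf{h}_{:K}]\in\mathbb{C}^{M\times K}$, let $P>0$, $N_0>0$, and let each user $k\in\{1,\dots,K\}$ have a rate $r_k\ge 0$. Let $\hat S\subseteq\{1,\dots,K\}$ and let $o\neq p$ be two users not in $\hat S$, with $C=\{o,p\}$. Suppose $$R_o^{\hat S}\ge r_o,\qquad R_p^{\hat S}\ge r_p,\qquad R_C^{\hat S}<r_o+r_p .$$ Then, given that the users in $\hat S$ are in outage, both $o$ and $p$ are in outage; that is, there is no set $S^*\subseteq\{1,\dots,K\}\setminus\hat S$ with $S^*\cap\{o,p\}\neq\emptyset$ such that for every $S\subseteq S^*$, $$\sum_{k\in S}r_k\le \log_2\det\!\Big(\mathbf{I}_M+\tfrac{P}{N_0}\mathbf{H}_{:S}\mathbf{H}_{:S}^{\mathrm H}\big(\mathbf{I}_M+\tfrac{P}{N_0}\mathbf{H}_{:\bar S}\mathbf{H}_{:\bar S}^{\mathrm H}\big)^{-1}\Big),\qquad \bar S=\{1,\dots,K\}\setminus S^* .$$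
   Context: For a set $A\subseteq\{1,\dots,K\}$, $\mathbf{H}_{:A}$ denotes the $M\times|A|$ submatrix of $\mathbf{H}$ with columns $\{\mathbf{h}_{:k}:k\in A\}$ (for $A=\emptyset$ the term $\mathbf{H}_{:A}\mathbf{H}_{:A}^{\mathrm H}$ is the zero matrix), and the superscript $\mathrm H$ is conjugate transpose. For sets $X,Y\subseteq\{1,\dots,K\}$, $R_X^{Y}=\log_2\det\big(\mathbf{I}_M+\frac{P}{N_0}\mathbf{H}_{:X}\mathbf{H}_{:X}^{\mathrm H}(\mathbf{I}_M+\frac{P}{N_0}\mathbf{H}_{:Y}\mathbf{H}_{:Y}^{\mathrm H})^{-1}\big)$ is the achievable (sum) rate of the users in $X$ under interference from the users in $Y$; for a single user $x$ write $R_x^Y=R_{\{x\}}^Y$. A set $S^*$ of users satisfying the displayed condition for all $S\subseteq S^*$ is a set of users that can all be successfully decoded (by successive and/or joint group decoding) at their rates while the remaining users $\{1,\dots,K\}\setminus S^*$ are treated as noise; a user belonging to no such set is said to be in outage. This models a Gaussian multiple-access channel $\mathbf{y}=\mathbf{H}\mathbf{x}+\mathbf{z}$ with $K$ single-antenna transmitters each of power $P$, an $M$-antenna receiver, and noise $\mathcal{CN}(0,N_0\mathbf{I}_M)$. *)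

(* Defs.v *)
From HB Require Import structures.
From mathcomp Require Import all_boot all_order all_algebra.
From mathcomp Require Import all_classical all_reals all_analysis.
From mathcomp Require Import complex.
Set Implicit Arguments. Unset Strict Implicit. Unset Printing Implicit Defensive.
Import Order.TTheory GRing.Theory Num.Theory.
Local Open Scope ring_scope.

Section Defs.
Variable R : realType.
Local Notation C := (R[i]).

Definition ctmx m n (A : 'M[C]_(m, n)) : 'M[C]_(n, m) := (map_mx Num.conj A)^T.

(* H_{:A} : the M x |A| submatrix of H with the columns indexed by A (in increasing order) *)
Definition colsub_set M K (H : 'M[C]_(M, K)) (A : {set 'I_K}) : 'M[C]_(M, #|A|) :=
  colsub (fun j : 'I_#|A| => @enum_val _ (mem A) j) H.

Definition gram M K (H : 'M[C]_(M, K)) (A : {set 'I_K}) : 'M[C]_M :=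
  colsub_set H A *m ctmx (colsub_set H A).

Definition log2 (x : R) : R := ln x / ln 2.

(* R_X^Y = log2 det (I + P/N0 H_X H_X^H (I + P/N0 H_Y H_Y^H)^{-1}).
   The determinant is a (positive) real number; we take its real part. *)
Definition rate M K (H : 'M[C]_(M, K)) (P N0 : R) (X Y : {set 'I_K}) : R :=
  let snr := ((P / N0)%:C)%C in
  log2 (complex.Re (\det (1%:M + snr *: gram H X *m invmx (1%:M + snr *: gram H Y)))).

End Defs.

(* Main.v *)
Require Import Defs.
From HB Require Import structures.
From mathcomp Require Import all_boot all_order all_algebra.
From mathcomp Require Import all_classical all_reals all_analysis.
From mathcomp Require Import complex.
From mathcomp Require Import ring.
Set Implicit Arguments. Unset Strict Implicit. Unset Printing Implicit Defensive.
Import Order.TTheory GRing.Theory Num.Theory.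
Local Open Scope ring_scope.


Lemma det_rank1 (F : comUnitRingType) n (w : 'cV[F]_n) (v : 'rV[F]_n) :
  \det (1%:M + w *m v) = 1 + (v *m w) 0 0.
Proof.
have E : block_mx (1%:M : 'M[F]_1) 0 w 1%:M *m block_mx 1%:M (- v) 0 (1%:M + w *m v)
       = block_mx (1%:M + v *m w) (- v) 0 1%:M *m block_mx 1%:M 0 w 1%:M.
  rewrite !mulmx_block !mul1mx !mulmx1 !mul0mx !mulmx0 !addr0 !add0r.
  by rewrite mulmxN mulNmx (addrC 1%:M (w *m v)) addKr addrK.
move: (congr1 determinant E).
rewrite !det_mulmx !det_lblock !det_ublock !det1 !mul1r !mulr1.
by move=> ->; rewrite det_mx11 !mxE eqxx.
Qed.

Section LA.
Variable R : realType.
Local Notation C := (R[i]).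

Lemma ctmxE m n (A : 'M[C]_(m, n)) i j : ctmx A i j = Num.conj (A j i).
Proof. by rewrite !mxE. Qed.

Lemma ctmxM m n l (A : 'M[C]_(m, n)) (B : 'M[C]_(n, l)) :
  ctmx (A *m B) = ctmx B *m ctmx A.
Proof. by rewrite /ctmx map_mxM trmx_mul. Qed.

Lemma ctmxD m n (A B : 'M[C]_(m, n)) : ctmx (A + B) = ctmx A + ctmx B.
Proof. by rewrite /ctmx map_mxD linearD. Qed.

Lemma ctmxZ m n (a : C) (A : 'M[C]_(m, n)) : ctmx (a *: A) = Num.conj a *: ctmx A.
Proof. by rewrite /ctmx map_mxZ linearZ. Qed.

Lemma ctmxK m n (A : 'M[C]_(m, n)) : ctmx (ctmx A) = A.
Proof. by apply/matrixP=> i j; rewrite !mxE conjCK. Qed.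

Lemma ctmx1 n : ctmx (1%:M : 'M[C]_n) = 1%:M.
Proof. by rewrite /ctmx map_mx1 trmx1. Qed.

Lemma ctmx_sum n I (r : seq I) (P : pred I) (F : I -> 'M[C]_n) :
  ctmx (\sum_(i <- r | P i) F i) = \sum_(i <- r | P i) ctmx (F i).
Proof.
apply: (big_morph (@ctmx R n n) (@ctmxD n n)).
by apply/matrixP=> i j; rewrite !mxE conjC0.
Qed.

Lemma ctmx_inv n (A : 'M[C]_n) : ctmx (invmx A) = invmx (ctmx A).
Proof. by rewrite /ctmx map_invmx trmx_inv. Qed.

Lemma gramE M K (H : 'M[C]_(M, K)) (A : {set 'I_K}) :
  gram H A = \sum_(k in A) col k H *m ctmx (col k H).
Proof.
apply/matrixP=> i j; rewrite /gram summxE mxE.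
rewrite (big_enum_val (A := mem A) (fun k => (col k H *m ctmx (col k H)) i j)) /=.
apply: eq_bigr => l _; rewrite !mxE big_ord1 !mxE.
by [].
Qed.


Variables (n K : nat) (g : 'I_K -> 'cV[C]_n) (s : C).
Hypothesis s_gt0 : 0 < s.

Definition Gs (Y : {set 'I_K}) := \sum_(k in Y) g k *m ctmx (g k).
Definition AY (Y : {set 'I_K}) : 'M[C]_n := 1%:M + s *: Gs Y.
Definition q (Y : {set 'I_K}) k := (ctmx (g k) *m invmx (AY Y) *m g k) 0 0.

Lemma conj_s : Num.conj s = s.
Proof. by rewrite geC0_conj // ltW. Qed.

Lemma AY_herm Y : ctmx (AY Y) = AY Y.
Proof.
rewrite /AY ctmxD ctmx1 ctmxZ conj_s /Gs ctmx_sum; congr (_ + _ *: _).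
by apply: eq_bigr => k _; rewrite ctmxM ctmxK.
Qed.

Lemma mx11M (a : 'M[C]_(1,1)) (b : 'M[C]_(1,1)) : (a *m b) 0 0 = a 0 0 * b 0 0.
Proof. by rewrite !mxE big_ord1. Qed.

Lemma quad_ge0_term (y : 'cV[C]_n) i : 0 <= ctmx y 0 i * y i 0.
Proof. rewrite !mxE mulrC; exact: mulcJ_ge0. Qed.

Lemma quad_ge0 (y : 'cV[C]_n) : 0 <= (ctmx y *m y) 0 0.
Proof.
rewrite mxE; apply: sumr_ge0 => i _; rewrite !mxE mulrC; exact: mulcJ_ge0.
Qed.

Lemma quad_eq0 (y : 'cV[C]_n) : (ctmx y *m y) 0 0 = 0 -> y = 0.
Proof.
rewrite mxE => /psumr_eq0P H0; apply/matrixP=> i j; rewrite (ord1 j) mxE.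
have /eqP := H0 (fun i _ => quad_ge0_term y i) i isT.
rewrite !mxE mulf_eq0 => /orP[/eqP E|/eqP //].
by rewrite -[y i 0]conjCK E conjC0.
Qed.

Lemma quadA_ge (Y : {set 'I_K}) (y : 'cV[C]_n) :
  (ctmx y *m y) 0 0 <= (ctmx y *m AY Y *m y) 0 0.
Proof.
rewrite /AY mulmxDr mulmx1 mulmxDl -scalemxAr -scalemxAl [X in _ <= X]mxE lerDl [X in 0 <= X]mxE.
rewrite /Gs mulmx_sumr mulmx_suml summxE.
apply: mulr_ge0; first exact: ltW.
apply: sumr_ge0 => k _.
rewrite mulmxA -[ctmx y *m g k *m ctmx (g k) *m y]mulmxA mx11M.
rewrite -[ctmx y *m g k](ctmxK) ctmxM ctmxK ctmxE mulrC; exact: mulcJ_ge0.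
Qed.

Lemma det_update (A : 'M[C]_n) (h : 'cV[C]_n) : A \in unitmx ->
  \det (A + s *: (h *m ctmx h)) = \det A * (1 + s * (ctmx h *m invmx A *m h) 0 0).
Proof.
move=> Au.
have -> : A + s *: (h *m ctmx h) = A *m (1%:M + (s *: (invmx A *m h)) *m ctmx h).
  by rewrite mulmxDr mulmx1 -scalemxAl -scalemxAr !mulmxA mulmxV // mul1mx.
rewrite det_mulmx det_rank1; congr (_ * (1 + _)).
by rewrite -scalemxAr mxE mulmxA.
Qed.

Lemma q_ge0 (Y : {set 'I_K}) k : AY Y \in unitmx -> 0 <= q Y k.
Proof.
move=> Au; rewrite /q.
set y := invmx (AY Y) *m g k.
have gE : g k = AY Y *m y by rewrite /y mulKVmx.
rewrite {1}gE ctmxM AY_herm -/y -mulmxA -[invmx _ *m _]/y.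
apply: le_trans (quad_ge0 y) (quadA_ge Y y).
Qed.

Lemma Gs0 : Gs finset.set0 = 0.
Proof. by rewrite /Gs big_set0. Qed.

Lemma AY0 : AY finset.set0 = 1%:M.
Proof. by rewrite /AY Gs0 scaler0 addr0. Qed.

Lemma Gs_add (Y : {set 'I_K}) k : k \notin Y -> Gs (k |: Y) = g k *m ctmx (g k) + Gs Y.
Proof. by move=> kY; rewrite /Gs big_setU1. Qed.

Lemma AY_add (Y : {set 'I_K}) k : k \notin Y -> AY (k |: Y) = AY Y + s *: (g k *m ctmx (g k)).
Proof. by move=> kY; rewrite /AY Gs_add // scalerDr addrAC addrA. Qed.

Lemma one_sq_gt0 (x : C) : 0 <= x -> 0 < 1 + s * x.
Proof.
move=> x0; apply: (@lt_le_trans _ _ 1); first exact: ltr01.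
by rewrite lerDl; apply: mulr_ge0 => //; exact: ltW.
Qed.

Lemma AY_pos (Y : {set 'I_K}) : AY Y \in unitmx /\ 0 < \det (AY Y).
Proof.
have [m] := ubnP #|Y|; elim: m Y => [|m IH] Y hY; first by exfalso; rewrite ltn0 in hY; exact: notF.
have [->|[k kY]] := set_0Vmem Y.
  by rewrite AY0 det1 unitmx1 ltr01.
have kY' : k \notin Y :\ k by rewrite finset.setD11.
have YE : Y = k |: (Y :\ k) by rewrite finset.setD1K.
rewrite (cardsD1 k) kY add1n ltnS in hY.
have [u d] := IH (Y :\ k) hY.
have dp : 0 < \det (AY Y).
  rewrite YE (AY_add kY') (det_update _ u); apply: mulr_gt0; first exact: d.
  exact/one_sq_gt0/q_ge0.
split; last exact: dp.
rewrite unitmxE unitfE; exact: lt0r_neq0 dp.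
Qed.

Lemma sherman (A : 'M[C]_n) (h : 'cV[C]_n) : A \in unitmx ->
  let c := 1 + s * (ctmx h *m invmx A *m h) 0 0 in c != 0 ->
  invmx (A + s *: (h *m ctmx h)) =
  invmx A - (s / c) *: (invmx A *m (h *m ctmx h) *m invmx A).
Proof.
move=> Au c c0.
set B := invmx A; set Pm := h *m ctmx h.
set a := (ctmx h *m B *m h) 0 0.
have PBP : Pm *m B *m Pm = a *: Pm.
  rewrite /Pm !mulmxA -(mulmxA h (ctmx h) B) -(mulmxA h (ctmx h *m B) h).
  by rewrite [X in h *m X *m _]mx11_scalar mul_mx_scalar -scalemxAl.
have ca : c = 1 + s * a by [].
clearbody Pm a c.
set t := s / c; set X := B - _.
have h1 : A *m X = 1%:M - t *: (Pm *m B).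
  by rewrite /X mulmxBr (mulmxV Au) -scalemxAr !mulmxA (mulmxV Au) mul1mx.
have h2 : Pm *m X = (1 - t * a) *: (Pm *m B).
  rewrite /X mulmxBr -scalemxAr !mulmxA PBP -scalemxAl scalerA.
  by rewrite scalerBl scale1r mulrC.
have E : (A + s *: Pm) *m X = 1%:M.
  rewrite mulmxDl h1 -scalemxAl h2 scalerA -addrA -scaleNr -scalerDl.
  suff -> : - t + s * (1 - t * a) = 0 by rewrite scale0r addr0.
  rewrite /t ca; field.
  by rewrite -ca.
have [u _] := mulmx1_unit E.
by have := mulKmx u X; rewrite E mulmx1.
Qed.

Lemma mxBE m l (A B : 'M[C]_(m, l)) i j : (A - B) i j = A i j - B i j.
Proof. by rewrite !mxE. Qed.

Lemma mxZE m l (a : C) (A : 'M[C]_(m, l)) i j : (a *: A) i j = a * A i j.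
Proof. by rewrite !mxE. Qed.

Lemma invAY_herm (Y : {set 'I_K}) : ctmx (invmx (AY Y)) = invmx (AY Y).
Proof. by rewrite ctmx_inv AY_herm. Qed.

Lemma q_step (Y : {set 'I_K}) j k : j \notin Y -> q (j |: Y) k <= q Y k.
Proof.
move=> jY; have [u _] := AY_pos Y.
have c0 : 1 + s * q Y j != 0 by apply: lt0r_neq0; apply/one_sq_gt0/q_ge0.
rewrite /q (AY_add jY) (sherman u c0).
set B := invmx (AY Y); set t := s / _.
rewrite mulmxBr mulmxBl mxBE gerBl -scalemxAr -scalemxAl mxZE.
apply: mulr_ge0.
  apply: divr_ge0; first exact: ltW.
  by apply: ltW; apply/one_sq_gt0/q_ge0.
rewrite !mulmxA -(mulmxA (ctmx (g k) *m B *m g j) (ctmx (g j))) -(mulmxA (ctmx (g k) *m B *m g j) (ctmx (g j) *m B)) mx11M.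
have -> : ctmx (g j) *m B *m g k = ctmx (ctmx (g k) *m B *m g j).
  by rewrite !ctmxM ctmxK invAY_herm mulmxA.
rewrite ctmxE; exact: mulcJ_ge0.
Qed.

Lemma q_mono (Y Y' : {set 'I_K}) k : Y \subset Y' -> q Y' k <= q Y k.
Proof.
have [m] := ubnP #|Y'|; elim: m Y' => [|m IH] Y' hY' sub; first by exfalso; rewrite ltn0 in hY'; exact: notF.
have [E|[j hj]] := set_0Vmem (Y' :\: Y).
  have -> : Y' = Y by apply/eqP; rewrite finset.eqEsubset sub andbT -finset.setD_eq0 E.
  exact: lexx.
move: hj; rewrite inE => /andP[jY jY'].
have Y'E : Y' = j |: (Y' :\ j) by rewrite finset.setD1K.
rewrite (cardsD1 j) jY' add1n ltnS in hY'.
have sub' : Y \subset Y' :\ j.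
  apply/fintype.subsetP => x xY; rewrite !inE (fintype.subsetP sub x xY) andbT.
  by apply: contraNneq jY => <-.
apply: le_trans (IH _ hY' sub'); rewrite {1}Y'E; apply: q_step.
by rewrite finset.setD11.
Qed.

Lemma Gs_U (X Y : {set 'I_K}) : [disjoint X & Y] -> Gs (X :|: Y) = Gs X + Gs Y.
Proof.
move=> dXY; rewrite /Gs -bigU //; apply: eq_bigl => i; by rewrite !inE.
Qed.

Lemma AY_U (X Y : {set 'I_K}) : [disjoint X & Y] -> AY (X :|: Y) = AY Y + s *: Gs X.
Proof. by move=> d; rewrite /AY Gs_U // scalerDr addrAC addrA. Qed.

Lemma Re_gt0 (z : C) : 0 < z -> 0 < complex.Re z.
Proof. by rewrite ltcE => /andP[_]. Qed.

Lemma ReM_real (a b : C) : complex.Im a = 0 -> complex.Re (a * b) = complex.Re a * complex.Re b.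
Proof. by case: a => a1 a2; case: b => b1 b2 /= ->; rewrite mul0r subr0. Qed.

Definition f (Y : {set 'I_K}) : R := ln (complex.Re (\det (AY Y))).

Lemma f_add (Y : {set 'I_K}) k : k \notin Y ->
  f (k |: Y) = f Y + ln (complex.Re (1 + s * q Y k)).
Proof.
move=> kY; have [u d] := AY_pos Y.
have c : 0 < 1 + s * q Y k by apply/one_sq_gt0/q_ge0.
rewrite /f AY_add; last exact: kY.
rewrite det_update; last exact: u.
rewrite ReM_real; last exact: ger0_Im (ltW d).
rewrite lnM; first by [].
  by rewrite posrE; apply: Re_gt0.
by rewrite posrE; apply: Re_gt0.
Qed.

Lemma D_mono (Y Y' : {set 'I_K}) k : Y \subset Y' ->
  ln (complex.Re (1 + s * q Y' k)) <= ln (complex.Re (1 + s * q Y k)).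
Proof.
move=> sub; have [u _] := AY_pos Y; have [u' _] := AY_pos Y'.
have c : 0 < 1 + s * q Y k by apply/one_sq_gt0/q_ge0.
have c' : 0 < 1 + s * q Y' k by apply/one_sq_gt0/q_ge0.
rewrite ler_ln; first last.
- by rewrite posrE; apply: Re_gt0.
- by rewrite posrE; apply: Re_gt0.
have : 1 + s * q Y' k <= 1 + s * q Y k.
  rewrite lerD2l; apply: ler_wpM2l; [exact: ltW | exact: q_mono].
by rewrite lecE => /andP[_].
Qed.
Lemma subrr_le (a b : R) : a - a <= b - b.
Proof. by rewrite !subrr. Qed.

Lemma rearr_le (a b c a' b' c' : R) : a' - c' <= a - c -> b' <= b ->
  a' + b' - c' <= a + b - c.
Proof. by move=> h1 h2; rewrite addrAC [a + b - c]addrAC; apply: lerD. Qed.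

Lemma dimret (X Y Y' : {set 'I_K}) : Y \subset Y' -> [disjoint X & Y'] ->
  f (X :|: Y') - f Y' <= f (X :|: Y) - f Y.
Proof.
move=> sub; have [m] := ubnP #|X|; elim: m X => [|m IH] X hX dX.
  by exfalso; rewrite ltn0 in hX; exact: notF.
have [->|[x xX]] := set_0Vmem X.
  rewrite !finset.set0U; exact: subrr_le.
have XE : X = x |: (X :\ x) by rewrite finset.setD1K.
rewrite (cardsD1 x) xX add1n ltnS in hX.
have dX0 : [disjoint X :\ x & Y'] by apply: disjointWl dX; exact: finset.subD1set.
have xY' : x \notin Y' by rewrite (disjointFr dX xX).
have xX0 : x \notin X :\ x by rewrite finset.setD11.
have xY : x \notin Y by apply: contra xY'; exact: (fintype.subsetP sub).
have n1 : x \notin X :\ x :|: Y by rewrite inE negb_or xX0 xY.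
have n2 : x \notin X :\ x :|: Y' by rewrite inE negb_or xX0 xY'.
rewrite XE -!finset.setUA (f_add n1) (f_add n2).
apply: (rearr_le (IH _ hX dX0)).
apply: D_mono; exact: finset.setUS.
Qed.
End LA.


Section Rate.
Variable R : realType.
Variables (M K : nat) (H : 'M[R[i]]_(M, K)) (P N0 : R).
Hypotheses (hP : 0 < P) (hN0 : 0 < N0).

Let g := fun k : 'I_K => col k H.
Let s : R[i] := ((P / N0)%:C)%C.

Lemma s_pos : 0 < s.
Proof. by rewrite ltcE /= eqxx divr_gt0. Qed.

Lemma Re_inv_real (b : R[i]) : complex.Im b = 0 -> complex.Re (b^-1) = (complex.Re b)^-1.
Proof.
case: b => b1 b2 /= ->.
have [->|b0] := eqVneq b1 0; first by rewrite invr0 mul0r.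
by rewrite expr0n /= addr0 expr2 invfM mulrA divff // mul1r.
Qed.

Lemma rateE (X Y : {set 'I_K}) : [disjoint X & Y] ->
  rate H P N0 X Y = (f g s (X :|: Y) - f g s Y) / ln 2.
Proof.
move=> d; rewrite /rate /log2 /=.
have gE : forall A, gram H A = Gs g A by move=> A; rewrite gramE.
rewrite !gE -/s.
have [u dY] := AY_pos g s_pos Y.
have [_ dXY] := AY_pos g s_pos (X :|: Y).
have -> : 1%:M + s *: Gs g X *m invmx (1%:M + s *: Gs g Y) =
          AY g s (X :|: Y) *m invmx (AY g s Y).
  by rewrite (AY_U g s d) mulmxDl (mulmxV u).
rewrite det_mulmx det_inv (ReM_real _ (ger0_Im (ltW dXY))).
rewrite (Re_inv_real (ger0_Im (ltW dY))) /f.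
by rewrite lnM ?lnV ?posrE ?invr_gt0 ?Re_gt0.
Qed.


Lemma rate_mono (X Y Y' : {set 'I_K}) : Y \subset Y' -> [disjoint X & Y'] ->
  rate H P N0 X Y' <= rate H P N0 X Y.
Proof.
move=> sub d; have d' : [disjoint X & Y] by apply: disjointWr d.
rewrite (rateE d) (rateE d'); apply: ler_wpM2r; last exact: (dimret g s_pos sub d).
by rewrite invr_ge0 ln_ge0 // ler1n.
Qed.

Lemma disj1 (x : 'I_K) (A : {set 'I_K}) : [disjoint [set x] & A] = (x \notin A).
Proof. by rewrite disjoints1. Qed.

Lemma chain_alg (x y z l : R) : (x - y) / l = (z - y) / l + (x - z) / l.
Proof. ring. Qed.

Lemma rate_chain (a b : 'I_K) (S : {set 'I_K}) : a != b -> a \notin S -> b \notin S ->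
  rate H P N0 [set a; b] S = rate H P N0 [set b] S + rate H P N0 [set a] (b |: S).
Proof.
move=> ab aS bS.
have d1 : [disjoint [set a; b] & S].
  by rewrite -setI_eq0; apply/eqP/setP => x; rewrite !inE; case: eqP => [->|]; case: eqP => [->|] //=; rewrite ?(negbTE aS) ?(negbTE bS) ?andbF.
have d2 : [disjoint [set b] & S] by rewrite disj1.
have d3 : [disjoint [set a] & b |: S] by rewrite disj1 !inE negb_or ab.
rewrite (rateE d1) (rateE d2) (rateE d3) finset.setUA.
exact: chain_alg.
Qed.

End Rate.

From mathcomp Require Import lra.

Lemma alg1 (R : realType) (ra rb x y z : R) :
  rb <= x -> x + y < ra + rb -> ra <= z -> z <= y -> False.
Proof. move=> *; lra. Qed.

Lemma alg2 (R : realType) (a b c : R) : a <= b -> b <= c -> c < a -> False.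
Proof. move=> *; lra. Qed.

Unset Implicit Arguments. Set Strict Implicit.

Theorem lemmaV1 (R : realType) (M K : nat) (hM : (0 < M)%N) (hK : (0 < K)%N)
    (H : 'M[R[i]]_(M, K)) (P N0 : R) (hP : 0 < P) (hN0 : 0 < N0)
    (r : 'I_K -> R) (hr : forall k, 0 <= r k)
    (Shat : {set 'I_K}) (o p : 'I_K) (hop : o != p)
    (ho : o \notin Shat) (hp : p \notin Shat)
    (h1 : r o <= rate H P N0 [set o] Shat)
    (h2 : r p <= rate H P N0 [set p] Shat)
    (h3 : rate H P N0 [set o; p] Shat < r o + r p) :
  ~ exists Sstar : {set 'I_K},
      [/\ Sstar \subset ~: Shat,
          Sstar :&: [set o; p] != finset.set0 &
          forall S : {set 'I_K}, S \subset Sstar ->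
            \sum_(k in S) r k <= rate H P N0 S (~: Sstar)].
Proof.
move=> [Sstar [sub ne hS]].
have ShN : Shat \subset ~: Sstar.
  apply/fintype.subsetP => x xS; rewrite inE; apply/negP => xSs.
  by move: (fintype.subsetP sub x xSs); rewrite inE xS.
have disC : forall X : {set 'I_K}, X \subset Sstar -> [disjoint X & ~: Sstar].
  by move=> X XS; rewrite -finset.subsets_disjoint.
have oneCase : forall a b : 'I_K, a != b -> a \notin Shat -> b \notin Shat ->
   r b <= rate H P N0 [set b] Shat -> rate H P N0 [set a; b] Shat < r a + r b ->
   a \in Sstar -> b \notin Sstar -> False.
  move=> a b ab aS bS hb hab aSs bSs.
  have sa : [set a] \subset Sstar by rewrite finset.sub1set.
  have := hS _ sa; rewrite finset.big_set1 => ha.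
  have sub2 : b |: Shat \subset ~: Sstar by rewrite finset.subUset finset.sub1set inE bSs ShN.
  have hm := rate_mono H hP hN0 sub2 (disC _ sa).
  rewrite (rate_chain H hP hN0 ab aS bS) in hab.
  exact: (alg1 hb hab ha hm).
case: (boolP (o \in Sstar)) => oS; case: (boolP (p \in Sstar)) => pS.
- have sop : [set o; p] \subset Sstar by rewrite finset.subUset !finset.sub1set oS pS.
  have := hS _ sop; rewrite big_setU1 ?inE // finset.big_set1 => h.
  have hm := rate_mono H hP hN0 ShN (disC _ sop).
  exact: (alg2 h hm h3).
- exact: (oneCase o p hop ho hp h2 h3 oS pS).
- apply: (oneCase p o _ hp ho h1 _ pS oS); first by rewrite eq_sym.
  by rewrite finset.setUC addrC.
- move/negP: ne; apply; apply/eqP/setP => x; rewrite !inE.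
  by case: eqP => [->|_]; case: eqP => [->|_]; rewrite ?(negbTE oS) ?(negbTE pS) ?andbF.
Qed.
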